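(* Let $n\ge2$ and let $\mathcal G_n$, $\mathcal N_{0,n}$ be as in the context. Let $D=\Theta((\gamma,g,\mu),C(\mu\eta))$ be a compact open bisection in $\mathcal G_n$, where $\gamma,\mu,\eta\in X^*$ and $g\in\mathfrak G_n$. Then the following are equivalent: (1) for some $h\in\mathcal N_{0,n}$, $[(\varnothing,h,\varnothing),\mathbf 1^\infty]\in\overline D$; (2) for all $h\in\mathcal N_{0,n}$, $[(\varnothing,h,\varnothing),\mathbf 1^\infty]\in\overline D$.
   Context: Let $X=\{\mathbf 0,\mathbf 1\}$, $X^*$ the finite words (with empty word $\varnothing$), $X^\omega$ the infinite words, $C(\eta)=\{\eta w:w\in X^\omega\}$, $\mathbf 1^\infty$ the infinite word of ones. Fix $n\ge2$, a primitive polynomial $f_n$ of degree $n$ over $\mathbb F_2$ with root $\alpha$, and $\operatorname{Tr}(\beta)=\beta+\beta^2+\dots+\beta^{2^{n-1}}\in\mathbb F_2$. $\mathfrak G_n$ is the group of automorphisms of the binary rooted tree $X^*$ generated by $a$ ($a\cdot(\mathbf 0w)=\mathbf 1w$, $a\cdot(\mathbf 1w)=\mathbf 0w$) and $\iota_n(\beta)$, $\beta\in\mathbb F_{2^n}$, where $\iota_n(\beta)\cdot(\mathbf 0w)=\mathbf 0(a^{\operatorname{Tr}(\beta)}\cdot w)$, $\iota_n(\beta)\cdot(\mathbf 1w)=\mathbf 1(\iota_n(\alpha\beta)\cdot w)$; restrictions $g|_x$ are given by $g\cdot(xw)=(g\cdot x)(g|_x\cdot w)$. $\mathcal N_{0,n}=\iota_n(\mathbb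 F_{2^n})$. $\mathcal G_n$ is the groupoid of germs of the action of the inverse semigroup $\{(\eta,g,\mu)\}\cup\{0\}$ on $X^\omega$ with $(\eta,g,\mu):C(\mu)\to C(\eta)$, $\mu w\mapsto\eta(g\cdot w)$; germs $[(\eta,g,\mu),w]$, $w\in C(\mu)$, with $[(\eta,g,\mu),w]=[(\eta',g',\mu'),w']$ iff $w=w'$ and some finite prefix $\nu=\mu\epsilon=\mu'\epsilon'$ of $w$ satisfies $\eta(g\cdot\epsilon)=\eta'(g'\cdot\epsilon')$ and $g|_\epsilon=g'|_{\epsilon'}$. For $s=(\eta,g,\mu)$ and open $U\subseteq C(\mu)$, $\Theta(s,U)=\{[s,w]:w\in U\}$; these open bisections form a basis of the (non-Hausdorff) topology. $\overline D$ denotes closure in $\mathcal G_n$. *)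

(* Defs.v *)
From HB Require Import structures.
From mathcomp Require Import all_boot all_order all_algebra all_field.
Set Implicit Arguments. Unset Strict Implicit. Unset Printing Implicit Defensive.
Import GRing.Theory.
Local Open Scope ring_scope.

(* Letters: false = 0, true = 1.  Finite words: seq bool.
   Infinite words: nat -> bool. *)

Section Defs.
Variables (n : nat) (F : finFieldType) (alpha : F).

(* Tr(beta) = beta + beta^2 + ... + beta^(2^(n-1)), an element of F_2 = {0,1};
   trb beta is true iff Tr(beta) = 1. *)
Definition Tr (b : F) : F := \sum_(i < n) b ^+ (2 ^ i).
Definition trb (b : F) : bool := Tr b == 1.

Inductive gen := GA | GI of F.

Definition flip (w : seq bool) : seq bool :=
  match w with [::] => [::] | x :: w' => ~~ x :: w' end.

Fixpoint iota_act (b : F) (w : seq bool) {struct w} : seq bool :=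
  match w with
  | [::] => [::]
  | false :: w' => false :: (if trb b then flip w' else w')
  | true :: w' => true :: iota_act (alpha * b) w'
  end.

Definition act_gen (x : gen) (w : seq bool) : seq bool :=
  match x with GA => flip w | GI b => iota_act b w end.

(* An element of the group frak G_n is given by a word [x1; ...; xk] in the
   generators, and acts as the product x1 x2 ... xk.  Two words represent the
   same group element iff they act identically on X^*. *)
Definition actw (s : seq gen) (w : seq bool) : seq bool :=
  foldr act_gen w s.

(* restriction g|_x, determined by g.(x w) = (g.x)(g|_x . w) *)
Definition res (s : seq gen) (x : seq bool) (w : seq bool) : seq bool :=
  drop (size x) (actw s (x ++ w)).

Record isg := ISG { tgt : seq bool; grp : seq gen; src : seq bool }.

Definition cyl (p : seq bool) (w : nat -> bool) : Prop := mkseq w (size p) = p.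

Definition is_open (U : (nat -> bool) -> Prop) : Prop :=
  forall w, U w -> exists k, forall v, mkseq v k = mkseq w k -> U v.

Definition germ_eq (t t' : isg) (w : nat -> bool) : Prop :=
  exists k (e e' : seq bool),
    mkseq w k = src t ++ e /\ mkseq w k = src t' ++ e' /\
    tgt t ++ actw (grp t) e = tgt t' ++ actw (grp t') e' /\
    (forall u, res (grp t) e u = res (grp t') e' u).

(* germs: pairs (s, w) with w in C(src s), representing [s, w] *)
Definition germ := (isg * (nat -> bool))%type.
Definition valid_germ (x : germ) : Prop := cyl (src x.1) x.2.

(* membership of a germ in Theta(t, U), U open, U ⊆ C(src t) *)
Definition in_Theta (x : germ) (t : isg) (U : (nat -> bool) -> Prop) : Prop :=
  U x.2 /\ germ_eq t x.1 x.2.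

(* x lies in the closure of Theta(s, V): every basic open neighbourhood
   Theta(t, U) of x meets Theta(s, V) *)
Definition in_closure (x : germ) (s : isg) (V : (nat -> bool) -> Prop) : Prop :=
  forall (t : isg) (U : (nat -> bool) -> Prop),
    is_open U -> (forall w, U w -> cyl (src t) w) -> in_Theta x t U ->
    exists y : germ, valid_germ y /\ in_Theta y t U /\ in_Theta y s V.

End Defs.

Arguments GA {F}.
Definition ones : nat -> bool := fun _ => true.

(* Main.v *)
Require Import Defs.
From HB Require Import structures.
From mathcomp Require Import all_boot all_order all_algebra all_field zify.
Import GRing.Theory.
Local Open Scope ring_scope.


Lemma catI (T : Type) (s e e' : seq T) : s ++ e = s ++ e' -> e = e'.
Proof. by move=> h; have := congr1 (drop (size s)) h; rewrite !drop_size_cat. Qed.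

Lemma flip_size w : size (flip w) = size w.
Proof. by case: w. Qed.

Lemma flip_take e f : take (size e) (flip (e ++ f)) = flip e.
Proof. case: e => [|x e] /=; [by rewrite take0 | by rewrite take_size_cat]. Qed.

Lemma flip_cat1 l x R : flip (l ++ x :: R) = flip (l ++ [:: x]) ++ R.
Proof. by case: l => //= y l; rewrite -catA. Qed.

Lemma iota_size n (F : finFieldType) (alpha b : F) w :
  size (iota_act n alpha b w) = size w.
Proof.
elim: w b => [|[] w IH] b //=; first by rewrite IH.
by case: trb; rewrite ?flip_size.
Qed.

Lemma iota_take n (F : finFieldType) (alpha b : F) e f :
  take (size e) (iota_act n alpha b (e ++ f)) = iota_act n alpha b e.
Proof.
elim: e b => [|[] e IH] b /=; first by rewrite take0.
  by rewrite IH.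
by case: trb; rewrite ?flip_take ?take_size_cat.
Qed.

Lemma gen_size n (F : finFieldType) (alpha : F) x w :
  size (act_gen n alpha x w) = size w.
Proof. by case: x => [|b] /=; rewrite ?flip_size ?iota_size. Qed.

Lemma gen_take n (F : finFieldType) (alpha : F) x e f :
  take (size e) (act_gen n alpha x (e ++ f)) = act_gen n alpha x e.
Proof. by case: x => [|b] /=; rewrite ?flip_take ?iota_take. Qed.

Lemma actw_size n (F : finFieldType) (alpha : F) s w :
  size (actw n alpha s w) = size w.
Proof. by elim: s => [|x s IH] //=; rewrite gen_size. Qed.

Lemma actw_take n (F : finFieldType) (alpha : F) s e f :
  take (size e) (actw n alpha s (e ++ f)) = actw n alpha s e.
Proof.
elim: s => [|x s IH] /=; first by rewrite take_size_cat.
rewrite -[actw n alpha s (e ++ f)](cat_take_drop (size e)) IH.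
by rewrite -(actw_size n _ alpha s e) gen_take.
Qed.

Lemma actw_cat n (F : finFieldType) (alpha : F) s e f :
  actw n alpha s (e ++ f) = actw n alpha s e ++ res n alpha s e f.
Proof. by rewrite -{1}(cat_take_drop (size e) (actw n alpha s (e ++ f))) actw_take. Qed.

Lemma res_cat n (F : finFieldType) (alpha : F) s e f x :
  res n alpha s (e ++ f) x = drop (size f) (res n alpha s e (f ++ x)).
Proof. by rewrite /res -catA drop_drop size_cat addnC. Qed.

Lemma iota_nseq n (F : finFieldType) (alpha b : F) j z :
  iota_act n alpha b (nseq j true ++ z) = nseq j true ++ iota_act n alpha (alpha ^+ j * b) z.
Proof.
elim: j b => [|j IH] b /=; first by rewrite mul1r.
by rewrite IH exprSr mulrA.
Qed.

Lemma iota_cat_false n (F : finFieldType) (alpha b : F) u R :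
  ~~ all (pred1 true) u ->
  iota_act n alpha b (u ++ true :: R) = iota_act n alpha b (u ++ [:: true]) ++ R.
Proof.
elim: u b => [|[] u IH] b //= h.
  by rewrite IH.
case: trb => /=; [exact: (congr1 (cons false) (flip_cat1 _ _ _)) | by rewrite -catA].
Qed.

Lemma iota0 n (F : finFieldType) (alpha : F) z :
  trb n (0 : F) = false -> iota_act n alpha 0 z = z.
Proof.
move=> h0; elim: z => [|[] z IH] //=; first by rewrite mulr0 IH.
by rewrite h0.
Qed.

Lemma flipK w : flip (flip w) = w.
Proof. by case: w => //= x w; rewrite negbK. Qed.

Lemma iota_add n (F : finFieldType) (alpha : F) :
  (forall x y : F, trb n (x + y) = trb n x (+) trb n y) ->
  forall x y z, iota_act n alpha x (iota_act n alpha y z) = iota_act n alpha (x + y) z.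
Proof.
move=> hadd x y z; elim: z x y => [|[] z IH] x y //=.
  by rewrite IH mulrDr.
rewrite hadd; case: (trb n x); case: (trb n y) => //=; by rewrite flipK.
Qed.

Lemma struct n (F : finFieldType) (alpha : F) :
  trb n (0 : F) = false ->
  (forall x y : F, trb n (x + y) = trb n x (+) trb n y) ->
  forall s, exists u c, (size u <= size s)%N /\
   forall j z, (size s <= j)%N ->
     actw n alpha s (nseq j true ++ z) =
     u ++ nseq (j - size u) true ++ iota_act n alpha (alpha ^+ j * c) z.
Proof.
move=> h0 hadd; elim => [|x s [u [c [hu H]]]].
  exists [::], 0; split => // j z _ /=.
  by rewrite mulr0 iota0 // subn0.
case: x => [|be].
  case: u hu H => [|y u] hu H.
    exists [:: false], c; split; [by move: hu => /=; lia | move=> j z /= hj].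
    rewrite H; last by lia.
    case: j hj => [|j] hj //=.
    by rewrite subn1.
  exists (~~ y :: u), c; split; [by move: hu => /=; lia | move=> j z /= hj].
  rewrite H //; lia.
case: (boolP (all (pred1 true) u)) => hall.
  exists [::], (be + c); split; [by move: hu => /=; lia | move=> j z /= hj].
  rewrite H; last by lia.
  move/all_pred1P: hall => ->.
  rewrite size_nseq catA -nseqD subnKC; last exact: leq_trans hu (ltnW hj).
  by rewrite iota_nseq iota_add // subn0 mulrDr.
exists (iota_act n alpha be (u ++ [:: true])), c; split.
  rewrite iota_size size_cat /=; move: hu; lia.
move=> j z /= hj; rewrite H; last by lia.
have -> : (j - size u = (j - size u - 1).+1)%N by move: hu hj => /=; lia.
by rewrite /= iota_cat_false // iota_size size_cat /= subnDA.
Qed.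

Set Implicit Arguments. Unset Strict Implicit.
Lemma two0 (F : finFieldType) n : #|F| = (2 ^ n)%N -> (2%:R : F) = 0.
Proof. by move=> h; apply: pcharf0; apply: (card_finPcharP h). Qed.

Lemma addxx (F : finFieldType) n : #|F| = (2 ^ n)%N -> forall x : F, x + x = 0.
Proof. by move=> h x; rewrite -mulr2n -mulr_natr (two0 h) mulr0. Qed.

Lemma sq_add (F : finFieldType) n : #|F| = (2 ^ n)%N -> forall x y : F,
  (x + y) ^+ 2 = x ^+ 2 + y ^+ 2.
Proof. by move=> h x y; rewrite sqrrD mulr2n (addxx h) addr0. Qed.

Lemma pow2_add (F : finFieldType) n : #|F| = (2 ^ n)%N -> forall (x y : F) i,
  (x + y) ^+ (2 ^ i) = x ^+ (2 ^ i) + y ^+ (2 ^ i).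
Proof.
move=> h x y; elim => [|i IH]; first by rewrite !expr1.
by rewrite expnSr !exprM IH (sq_add h).
Qed.

Lemma Tr_add (F : finFieldType) n : #|F| = (2 ^ n)%N -> forall x y : F,
  Tr n (x + y) = Tr n x + Tr n y.
Proof.
move=> h x y; rewrite /Tr -big_split; apply: eq_bigr => i _; exact: pow2_add h _ _ _.
Qed.

Lemma Tr_sqx (F : finFieldType) n : (0 < n)%N -> #|F| = (2 ^ n)%N -> forall x : F,
  Tr n (x ^+ 2) = Tr n x.
Proof.
case: n => [|n] // _ h x; rewrite /Tr big_ord_recr big_ord_recl /= addrC; congr (_ + _).
  by rewrite -exprM -expnS -h expf_card.
by apply: eq_bigr => i _; rewrite -exprM -expnS.
Qed.

Lemma Tr_sq (F : finFieldType) n : (0 < n)%N -> #|F| = (2 ^ n)%N -> forall x : F,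
  (Tr n x) ^+ 2 = Tr n x.
Proof.
move=> hn h x; rewrite -{2}(Tr_sqx hn h x) /Tr.
rewrite (big_morph (fun a : F => a ^+ 2) (sq_add h) (expr0n _ 2)).
by apply: eq_bigr => i _; rewrite exprAC.
Qed.

Lemma Tr01 (F : finFieldType) n : (0 < n)%N -> #|F| = (2 ^ n)%N -> forall x : F,
  Tr n x = 0 \/ Tr n x = 1.
Proof.
move=> hn h x; have := Tr_sq hn h x.
move/eqP; rewrite expr2 -subr_eq0 -[X in _ - X](mulr1 (Tr n x)) -mulrBr mulf_eq0 subr_eq0.
by case/orP => /eqP ->; [left | right].
Qed.

Lemma Tr0 (F : finFieldType) n : Tr n (0 : F) = 0.
Proof. by rewrite /Tr big1 // => i _; rewrite expr0n expn_eq0. Qed.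

Lemma trb0 (F : finFieldType) n : trb n (0 : F) = false.
Proof. by rewrite /trb Tr0 eq_sym oner_eq0. Qed.

Lemma trb_add (F : finFieldType) n : (0 < n)%N -> #|F| = (2 ^ n)%N -> forall x y : F,
  trb n (x + y) = trb n x (+) trb n y.
Proof.
move=> hn h x y; rewrite /trb (Tr_add h).
case: (Tr01 hn h x) => ->; case: (Tr01 hn h y) => ->;
  by rewrite ?addr0 ?add0r ?(addxx h) ?eqxx ?(eq_sym 0) ?oner_eq0.
Qed.

Lemma exists_j (F : finFieldType) n (alpha : F) :
  (2 <= n)%N -> #|F| = (2 ^ n)%N -> ((2 ^ n).-1).-primitive_root alpha ->
  forall (c c' : F) (B : nat), exists j, (B <= j)%N /\
    trb n (alpha ^+ j * c) = trb n (alpha ^+ j * c').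
Proof.
move=> hn h hprim c c' B.
have hn0 : (0 < n)%N by lia.
set L := (2 ^ n).-1 in hprim.
have hL : (3 <= L)%N.
  rewrite /L; have : (2 ^ 2 <= 2 ^ n)%N by rewrite leq_exp2l.
  rewrite (_ : (2 ^ 2 = 4)%N) //; lia.
have eqtr : forall x y : F, Tr n (x + y) = 0 -> trb n x = trb n y.
  move=> x y; rewrite (Tr_add h) /trb.
  case: (Tr01 hn0 h x) => ->; case: (Tr01 hn0 h y) => ->;
  by rewrite ?addr0 ?add0r ?(addxx h) ?eqxx // => /eqP; rewrite oner_eq0.
case: (eqVneq (c + c') 0) => hd.
  exists B; split => //; apply: eqtr; by rewrite -mulrDr hd mulr0 Tr0.
set x0 := alpha ^+ 2 + alpha.
have hx0 : Tr n x0 = 0 by rewrite (Tr_add h) (Tr_sqx hn0 h) (addxx h).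
have ha0 : alpha != 0 by rewrite (prim_root_eq0 hprim); lia.
have ha1 : alpha + 1 != 0.
  apply/negP => /eqP e.
  have e1 : alpha = 1 by rewrite -[alpha]addr0 -(addxx h 1) addrA e add0r.
  have := eq_prim_root_expr hprim 1 0.
  rewrite expr1 expr0 e1 eqxx => /esym /eqP.
  rewrite /L; move/eqP; rewrite eqn_mod_dvd // subn0.
  move=> /dvdn_leq; lia.
have hx0n : x0 != 0.
  have -> : x0 = alpha * (alpha + 1) by rewrite /x0 mulrDr mulr1 expr2.
  by rewrite mulf_neq0.
set y := x0 / (c + c').
have hy0 : y != 0 by rewrite /y mulf_neq0 // invr_neq0.
have hyL : y ^+ L = 1.
  have := expf_card y; rewrite h.
  have -> : (2 ^ n = L.+1)%N by rewrite /L prednK // expn_gt0.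
  rewrite exprS => e; apply: (mulfI hy0); by rewrite mulr1.
case: (prim_rootP hprim hyL) => i hi.
exists (i + B * L)%N; split; first by rewrite (leq_trans _ (leq_addl _ _)) // leq_pmulr //; lia.
apply: eqtr; rewrite -mulrDr exprD exprM exprAC (prim_expr_order hprim) expr1n mulr1 -hi.
by rewrite /y mulfVK.
Qed.


Definition agree n (F : finFieldType) (alpha : F) (s1 s2 : isg F) (w : nat -> bool) k :=
  exists e1 e2, mkseq w k = src s1 ++ e1 /\ mkseq w k = src s2 ++ e2 /\
    tgt s1 ++ actw n alpha (grp s1) e1 = tgt s2 ++ actw n alpha (grp s2) e2 /\
    (forall u, res n alpha (grp s1) e1 u = res n alpha (grp s2) e2 u).

Lemma agree_sym n (F : finFieldType) (alpha : F) s1 s2 w k :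
  agree n alpha s1 s2 w k -> agree n alpha s2 s1 w k.
Proof. by case=> e1 [e2 [h1 [h2 [h3 h4]]]]; exists e2, e1; split; [done | split; [done | split; [done | move=> u; by rewrite h4]]]. Qed.

Lemma agree_trans n (F : finFieldType) (alpha : F) s1 s2 s3 w k :
  agree n alpha s1 s2 w k -> agree n alpha s2 s3 w k -> agree n alpha s1 s3 w k.
Proof.
case=> e1 [e2 [h1 [h2 [h3 h4]]]] [e2' [e3 [h1' [h2' [h3' h4']]]]].
have ee : e2 = e2' by apply: (@catI _ (src s2)); rewrite -h2 -h1'.
subst e2'; exists e1, e3; do 3 (split => //); first by rewrite h3.
by move=> u; rewrite h4.
Qed.

Lemma take_mkseq' (w : nat -> bool) k k' : (k <= k')%N -> take k (mkseq w k') = mkseq w k.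
Proof.
move=> hk; apply: (@eq_from_nth _ true).
  by rewrite size_takel ?size_mkseq.
move=> i; rewrite size_takel ?size_mkseq // => hi.
rewrite nth_take // !nth_mkseq //; exact: leq_trans hi hk.
Qed.

Lemma mkseq_true (f : nat -> bool) k : (forall i, (i < k)%N -> f i) -> mkseq f k = nseq k true.
Proof.
move=> h; apply: (@eq_from_nth _ true); first by rewrite size_mkseq size_nseq.
by move=> i; rewrite size_mkseq => hi; rewrite nth_mkseq // nth_nseq hi h.
Qed.

Lemma agree_mono n (F : finFieldType) (alpha : F) s1 s2 w k k' :
  agree n alpha s1 s2 w k -> (k <= k')%N -> agree n alpha s1 s2 w k'.
Proof.
case=> e1 [e2 [h1 [h2 [h3 h4]]]] hk.
set f := drop k (mkseq w k').
have hw : mkseq w k' = mkseq w k ++ f by rewrite -(take_mkseq' w hk) cat_take_drop.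
exists (e1 ++ f), (e2 ++ f); split; first by rewrite hw h1 catA.
split; first by rewrite hw h2 catA.
split; first by rewrite !actw_cat !catA h3 h4.
by move=> u; rewrite !res_cat h4.
Qed.

Lemma agree_refl n (F : finFieldType) (alpha : F) s w :
  cyl (src s) w -> agree n alpha s s w (size (src s)).
Proof. by move=> h; exists [::], [::]; rewrite cats0 h. Qed.

Unset Implicit Arguments. Set Strict Implicit.

Theorem mainTheorem7 (n : nat) (F : finFieldType) (alpha : F) :
  (2 <= n)%N -> #|F| = (2 ^ n)%N -> ((2 ^ n).-1).-primitive_root alpha ->
  forall (gamma mu eta : seq bool) (g : seq (gen F)),
    let D := ISG gamma g mu in
    (exists b : F,
        in_closure n alpha (ISG [::] [:: GI b] [::], ones) D (cyl (mu ++ eta)))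
    <->
    (forall b : F,
        in_closure n alpha (ISG [::] [:: GI b] [::], ones) D (cyl (mu ++ eta))).
Proof.
move=> hn hcard hprim gamma mu eta g D; split; last first.
  by move=> h; exists 0; apply: h.
case=> b Pb b' t U hUo hUs [hUx hgx].
have hn0 : (0 < n)%N by lia.
have [u [c [hu Hs]]] := struct n F alpha (@trb0 F n) (trb_add hn0 hcard) g.
case: hgx => k1 [e1 [e2 [he1 [he2 [htg1 hres1]]]]].
have [k2 hk2] := hUo _ hUx.
set p := size mu. set m := size (mu ++ eta). set J := size g.
set M := (p + J + m).+1.
have o1 : is_open (cyl (nseq M true)).
  by move=> w hw; exists (size (nseq M true)) => v hv; rewrite /cyl hv.
have o2 : forall w, cyl (nseq M true) w -> cyl (src (ISG [::] [:: GI b] [::])) w by [].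
have o3 : in_Theta n alpha (ISG [::] [:: GI b] [::], ones) (ISG [::] [:: GI b] [::]) (cyl (nseq M true)).
  split; first by rewrite /cyl size_nseq mkseq_true.
  by exists 0%N, [::], [::].
have [y [hvy [[hU0 hg1] [hV hg2]]]] := Pb _ _ o1 o2 o3.
set w := y.2 in hU0 hV hg1 hg2.
have [k hk] : exists k, agree n alpha D (ISG [::] [:: GI b] [::]) w k.
  case: hg1 => ka hka; case: hg2 => kb hkb.
  exists (maxn ka kb); apply: (@agree_trans _ _ _ _ y.1).
    exact: agree_mono hkb (leq_maxr _ _).
  exact: agree_sym (agree_mono hka (leq_maxl _ _)).
have hwM : mkseq w M = nseq M true by move: hU0; rewrite /cyl size_nseq.
have hmM : (m <= M)%N by rewrite /M; lia.
have hwm : mu ++ eta = nseq m true.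
  by rewrite -hV /m -/m -(take_mkseq' w hmM) hwM take_nseq.
have hpm : (p <= m)%N by rewrite /m size_cat; lia.
have hmu : mu = nseq p true.
  by rewrite -(take_size_cat eta (erefl (size mu))) hwm take_nseq.
have [eD [e0 [hD [hT [htg hres]]]]] := agree_mono hk (leq_maxl k M).
set K := maxn k M in hD hT.
set r := drop M (mkseq w K).
have hwK : mkseq w K = nseq M true ++ r.
  by rewrite -hwM -(take_mkseq' w (leq_maxr k M)) cat_take_drop.
have hpM : (p <= M)%N by rewrite /M; lia.
have heD : eD = nseq (M - p) true ++ r.
  apply: (@catI _ mu); rewrite -hD hwK {1}hmu catA -nseqD subnKC //.
have he0 : e0 = nseq M true ++ r by rewrite -[e0]/([::] ++ e0) -hT.
have hJ : (J <= M - p)%N by rewrite /M; lia.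
have htg' : gamma ++ u ++ nseq (M - p - size u) true ++ iota_act n alpha (alpha ^+ (M - p) * c) r
   = nseq M true ++ iota_act n alpha (alpha ^+ M * b) r.
  by rewrite -Hs // -iota_nseq -heD -he0; exact: htg.
have hgam : size gamma = p.
  have := congr1 size htg'; rewrite !size_cat !size_nseq !iota_size.
  move: hu hJ; rewrite -/J; lia.
have hA : gamma ++ u ++ nseq (M - p - size u) true = nseq M true.
  have := congr1 (take M) htg'; rewrite catA catA take_size_cat; last first.
    by rewrite !size_cat size_nseq; move: hu hJ; rewrite -/J; lia.
  by rewrite take_size_cat ?size_nseq // -catA.
have hgu : gamma ++ u = nseq (p + size u) true.
  have : all (pred1 true) (gamma ++ u ++ nseq (M - p - size u) true).
    by rewrite hA all_pred1_nseq.
  rewrite catA all_cat => /andP [/all_pred1P -> _].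
  by rewrite size_cat hgam.
rewrite /= in he1 he2 htg1 hres1 hk2.
have he2' : e2 = nseq k1 true by rewrite -he2 mkseq_true.
have [j' [hj' htr]] := exists_j hn hcard hprim c (alpha ^+ p * b') (J + k1 + k2 + m).
set N := (p + j')%N.
pose w' := fun i => i != N.
have hiota1 : forall bb, iota_act n alpha bb [:: false] = [:: false] by move=> bb /=; case: trb.
have hw'N : mkseq w' N.+1 = nseq N true ++ [:: false].
  rewrite mkseqS mkseq_true; first by rewrite cats1 /w' eqxx.
  by move=> i0 hi; rewrite /w' neq_ltn hi.
have hw'k : forall k', (k' <= N)%N -> mkseq w' k' = nseq k' true.
  move=> k' hk'; apply: mkseq_true => i0 hi; rewrite /w' neq_ltn (leq_trans hi hk') //.
have hUw' : U w'.
  apply: hk2; rewrite hw'k ?mkseq_true //; rewrite /N; lia.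
have hk1N : (k1 <= N)%N by rewrite /N; lia.
have hJj : (J <= j')%N by lia.
set f := nseq (N - k1) true ++ [:: false].
have he2f : e2 ++ f = nseq N true ++ [:: false] by rewrite he2' /f catA -nseqD subnKC.
exists (t, w'); split; first exact: hUs _ hUw'.
split; first by split => //; exists (size (src t)); apply: agree_refl; exact: hUs.
split; first by rewrite /= /cyl hwm size_nseq hw'k //; rewrite /N; lia.
exists N.+1, (nseq j' true ++ [:: false]), (e1 ++ f).
split; first by rewrite hw'N /= hmu /N nseqD catA.
split; first by rewrite hw'N /= catA -he1 mkseq_true // -he2f he2'.
split.
  rewrite /= Hs // hiota1 catA catA hgu -nseqD actw_cat catA htg1 hres1 -[iota_act n alpha b' e2]/(actw n alpha [:: GI b'] e2) -actw_cat he2f /=.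
  rewrite iota_nseq hiota1; congr (nseq _ _ ++ _); rewrite /N; lia.
move=> x /=.
rewrite [RHS]res_cat hres1 -res_cat he2f /res /= -!catA Hs // iota_nseq /=.
have hdr : forall (a X : seq bool) kk, size a = kk -> drop (size (nseq kk true ++ [:: false])) (a ++ false :: X) = X.
  move=> a X kk ha; rewrite size_cat size_nseq /= -ha.
  by rewrite (_ : a ++ false :: X = (a ++ [:: false]) ++ X) ?drop_size_cat ?size_cat // -catA.
rewrite catA hdr; last by rewrite size_cat size_nseq; move: hu hJj; rewrite -/J; lia.
rewrite hdr ?size_nseq //.
have -> : alpha ^+ N * b' = alpha ^+ j' * (alpha ^+ p * b') by rewrite mulrA -exprD addnC.
by rewrite htr.
Qed.
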